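(* Let $\mathcal{C}$ be a finite direct category of composition length $N\ge1$. Then $\mathsf{E}^n(\mathcal{C},k)=\mathsf{G}^n(\mathcal{C},k)=0$ for all $n>N$. Moreover, the map $\mathsf{G}^n(\mathcal{C},k)\to H^n(|\mathcal{C}|;\mathbb{Z})$ induced by the cochain map sending $[M]\in\mathrm{Gr}(k\mathcal{G}^{\mathcal{C}}_n)$ to the normalized cochain $\sigma\mapsto\dim_kM(\sigma)$ on non-degenerate $n$-simplices $\sigma$ of the nerve is an isomorphism for all $n\ge\lfloor N/2\rfloor+1$ and an epimorphism for $1\le n\le\lfloor N/2\rfloor$.
   Context: A small category is direct if it has no infinite chain of composable non-identity morphisms and no cycle of non-identity morphisms of positive length. A morphism is irreducible if it is not an identity and in any factorization one factor is an identity; the composition length is the maximal length of a chain of composable irreducible morphisms. Fix a field $k$; modules are functors to finite-dimensional $k$-vector spaces, $\mathrm{Gr}$ is the split Grothendieck group, $F^*M=M\circ F$. For $n\ge0$, $\widetilde{\mathcal{E}}^{\mathcal{C}}_n=\mathcal{C}^{[n]}$ has objects strings $[u_1|\cdots|u_n]$ = $x_0\xrightarrow{u_1}\cdots\xrightarrow{u_n}x_n$ and morphisms commutative ladders $(f_0,\dots,f_n)$; faces $\partial_i$ delete $x_i$ (composing $u_{i+1}u_i$ for $0<i<n$). $\widetilde{\mathcal{G}}^{\mathcal{C}}_n$ has the same objects and as morphisms the identities and, for each $w:x_n\to y_0$, the ladder $f_i=v_i\cdots v_1\,w\,u_n\cdots u_{i+1}$. A string is non-degenerate if no $u_i$ is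 an identity. $\mathcal{E}^{\mathcal{C}}_n$, $\mathcal{G}^{\mathcal{C}}_n$ are the full subcategories of $\widetilde{\mathcal{E}}^{\mathcal{C}}_n$, $\widetilde{\mathcal{G}}^{\mathcal{C}}_n$ on non-degenerate strings ($\mathcal{C}$ itself for $n=0$); with the restricted faces they are semi-simplicial objects, and $\mathsf{E}^*(\mathcal{C},k)$, $\mathsf{G}^*(\mathcal{C},k)$ denote the cohomology of $(\mathrm{Gr}(k\mathcal{E}^{\mathcal{C}}_\bullet),d)$, $(\mathrm{Gr}(k\mathcal{G}^{\mathcal{C}}_\bullet),d)$ with $d^n=\sum_{i=0}^{n+1}(-1)^i\partial_i^*$. *)

(* Defs.v *)
From HB Require Import structures.
From mathcomp Require Import all_boot all_order all_algebra.
Set Implicit Arguments. Unset Strict Implicit. Unset Printing Implicit Defensive.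
Import Order.TTheory GRing.Theory Num.Theory.

(* Finite (small) categories, presented with a single type of         *)
(* morphisms.  [comp f g] is the composite "f then g", i.e. g o f; it  *)
(* is meaningful when [cod f = dom g].                                  *)
Record FinCat := FinCatMk {
  Obj : finType;
  Mor : finType;
  dom : Mor -> Obj;
  cod : Mor -> Obj;
  idm : Obj -> Mor;
  comp : Mor -> Mor -> Mor;
  dom_idm : forall a, dom (idm a) = a;
  cod_idm : forall a, cod (idm a) = a;
  dom_comp : forall f g, cod f = dom g -> dom (comp f g) = dom f;
  cod_comp : forall f g, cod f = dom g -> cod (comp f g) = cod g;
  comp_idl : forall f, comp (idm (dom f)) f = f;
  comp_idr : forall f, comp f (idm (cod f)) = f;
  comp_assoc : forall f g h, cod f = dom g -> cod g = dom h ->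
     comp (comp f g) h = comp f (comp g h)
}.
Arguments dom {f0} _.
Arguments cod {f0} _.
Arguments idm {f0} _.
Arguments comp {f0} _ _.

Section Cat.
Variable C : FinCat.

Definition isid (f : Mor C) : bool := [exists a : Obj C, f == idm a].

Definition direct : Prop :=
  (~ exists s : nat -> Mor C,
       forall i, ~~ isid (s i) /\ cod (s i) = dom (s i.+1)) /\
  (~ exists (m : nat) (s : nat -> Mor C), 0 < m /\
       (forall i, i < m -> ~~ isid (s i)) /\
       (forall i, i < m -> cod (s i) = dom (s (i.+1 %% m)))).

Definition irreducible (f : Mor C) : Prop :=
  ~~ isid f /\
  forall g h : Mor C, cod g = dom h -> comp g h = f -> isid g \/ isid h.

Definition irr_chain (m : nat) (s : nat -> Mor C) : Prop :=
  (forall i, i < m -> irreducible (s i)) /\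
  (forall i, i.+1 < m -> cod (s i) = dom (s i.+1)).

Definition comp_length (N : nat) : Prop :=
  (exists s, irr_chain N s) /\ (forall m s, irr_chain m s -> m <= N).

(* Strings [u_1|...|u_n] = x_0 -> ... -> x_n, stored as the list of    *)
(* objects [x_0;...;x_n] and the list of morphisms [u_1;...;u_n].      *)
Definition str := (seq (Obj C) * seq (Mor C))%type.

(* a non-degenerate string of length n (= objects of E_n, G_n, and   *)
(* the non-degenerate n-simplices of the nerve of C)                  *)
Definition ndstr (n : nat) (s : str) : bool :=
  [&& size s.1 == n.+1, size s.2 == n,
      map dom s.2 == take n s.1, map cod s.2 == behead s.1
    & all (fun u => ~~ isid u) s.2].

Definition sdel {T} (i : nat) (l : seq T) : seq T := take i l ++ drop i.+1 l.

Fixpoint mergeAt (j : nat) (us : seq (Mor C)) : seq (Mor C) :=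
  match us with
  | u :: t =>
      match t with
      | v :: r => if j is j'.+1 then u :: mergeAt j' t else comp u v :: r
      | [::] => us
      end
  | [::] => [::]
  end.

(* the face d_i deleting x_i (composing u_{i+1} u_i for 0 < i < n) *)
Definition sface (i : nat) (s : str) : str :=
  (sdel i s.1,
   if i == 0 then behead s.2
   else if i == size s.2 then take (size s.2).-1 s.2
   else mergeAt i.-1 s.2).

(* ladders (f_0,...,f_n) : source string, target string, components *)
Definition lad := ((str * str) * seq (Mor C))%type.

Definition lface (i : nat) (l : lad) : lad :=
  ((sface i l.1.1, sface i l.1.2), sdel i l.2).

Definition lid (s : str) : lad := ((s, s), map idm s.1).

Definition lcomp (l1 l2 : lad) : lad :=
  ((l1.1.1, l2.1.2), [seq comp p.1 p.2 | p <- zip l1.2 l2.2]).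

(* morphisms of E_n: commutative ladders between non-degenerate strings *)
Definition ladE (n : nat) (l : lad) : bool :=
  let: ((s, t), fs) := l in
  [&& ndstr n s, ndstr n t, size fs == n.+1,
      map dom fs == s.1, map cod fs == t.1 &
      [seq comp p.1 p.2 | p <- zip s.2 (behead fs)] ==
      [seq comp p.1 p.2 | p <- zip (take n fs) t.2]].

Definition compL (d : Mor C) (L : seq (Mor C)) : Mor C :=
  if L is a :: r then foldl comp a r else d.

(* the ladder determined by w : x_n -> y_0:
   f_i = v_i ... v_1 w u_n ... u_{i+1} *)
Definition wlad (n : nat) (s t : str) (w : Mor C) : seq (Mor C) :=
  [seq compL w (drop i s.2 ++ w :: take i t.2) | i <- iota 0 n.+1].

(* morphisms of G_n: identities and the ladders determined by some w *)
Definition ladG (n : nat) (l : lad) : bool :=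
  let: ((s, t), fs) := l in
  ladE n l &&
  ((s == t) && (fs == map idm s.1) ||
   [exists w : Mor C, [&& last (dom w) s.1 == dom w,
                          head (cod w) t.1 == cod w &
                          fs == wlad n s t w]]).

Inductive kind := KE | KG.

Definition vlad (K : kind) (n : nat) (l : lad) : bool :=
  if K is KE then ladE n l else ladG n l.

(* Modules: functors to finite-dimensional k-vector spaces, given by a *)
(* dimension for every object and a matrix for every morphism (acting  *)
(* on row vectors, so M(g o f) = M(f) *m M(g)).                        *)
Variable k : fieldType.

Record rmod := RMod {
  mdim : str -> nat;
  mact : forall a b : str, lad -> 'M[k]_(mdim a, mdim b)
}.

Definition isMod (K : kind) (n : nat) (M : rmod) : Prop :=
  (forall a, ndstr n a -> mact M a a (lid a) = (1%:M)%R) /\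
  (forall a b c (l1 l2 : lad), vlad K n l1 -> vlad K n l2 ->
     l1.1 = (a, b) -> l2.1 = (b, c) ->
     mact M a c (lcomp l1 l2) = (mact M a b l1 *m mact M b c l2)%R).

Definition modIso (K : kind) (n : nat) (M N : rmod) : Prop :=
  exists (phi : forall a, 'M[k]_(mdim M a, mdim N a))
         (psi : forall a, 'M[k]_(mdim N a, mdim M a)),
    (forall a, ndstr n a -> (phi a *m psi a = 1%:M)%R /\ (psi a *m phi a = 1%:M)%R) /\
    (forall a b l, vlad K n l -> l.1 = (a, b) ->
       (mact M a b l *m phi b = phi a *m mact N a b l)%R).

Definition zmod : rmod := @RMod (fun _ => 0%N) (fun _ _ _ => 0%R).

Definition dsum (M N : rmod) : rmod :=
  @RMod (fun a => (mdim M a + mdim N a)%N)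
        (fun a b l => block_mx (mact M a b l) 0%R 0%R (mact N a b l)).

Definition bigdsum (Ms : seq rmod) : rmod := foldr dsum zmod Ms.

Definition pb (i : nat) (M : rmod) : rmod :=
  @RMod (fun s => mdim M (sface i s))
        (fun a b l => mact M (sface i a) (sface i b) (lface i l)).

(* Split Grothendieck group Gr(k D_n) as the group completion of the   *)
(* monoid of iso classes under direct sum: an element is a formal      *)
(* difference [P] - [Q], and [P]-[Q] = [P']-[Q'] iff                   *)
(* P + Q' + X ~= P' + Q + X for some module X.                         *)
Definition grel := (rmod * rmod)%type.

Definition grValid (K : kind) (n : nat) (x : grel) : Prop :=
  isMod K n x.1 /\ isMod K n x.2.

Definition grEq (K : kind) (n : nat) (x y : grel) : Prop :=
  exists X, isMod K n X /\
    modIso K n (dsum (dsum x.1 y.2) X) (dsum (dsum y.1 x.2) X).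

Definition gr0 : grel := (zmod, zmod).

(* d^n = sum_{i=0}^{n+1} (-1)^i d_i^* : Gr(k D_n) -> Gr(k D_{n+1}) *)
Definition dGr (n : nat) (x : grel) : grel :=
  let ev := [seq i <- iota 0 n.+2 | ~~ odd i] in
  let od := [seq i <- iota 0 n.+2 | odd i] in
  (bigdsum ([seq pb i x.1 | i <- ev] ++ [seq pb i x.2 | i <- od]),
   bigdsum ([seq pb i x.1 | i <- od] ++ [seq pb i x.2 | i <- ev])).

Definition grCocycle (K : kind) (n : nat) (x : grel) : Prop :=
  grEq K n.+1 (dGr n x) gr0.

Definition grCobound (K : kind) (n : nat) (x : grel) : Prop :=
  if n is n'.+1 then exists y, grValid K n' y /\ grEq K n (dGr n' y) x
  else grEq K 0 x gr0.

Definition grVanish (K : kind) (n : nat) : Prop :=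
  forall x, grValid K n x -> grCocycle K n x -> grCobound K n x.

(* Normalized integral cochains of the nerve of C (computing           *)
(* H^*(|C|; Z)): functions on non-degenerate n-simplices.               *)
Definition cochain := str -> int.

Definition cdelta (n : nat) (phi : cochain) : cochain :=
  fun s => (\sum_(i < n.+2)
     (-1) ^+ i * (if ndstr n (sface i s) then phi (sface i s) else 0))%R.

Definition cEq (n : nat) (phi psi : cochain) : Prop :=
  forall s, ndstr n s -> phi s = psi s.

Definition cCocycle (n : nat) (phi : cochain) : Prop :=
  cEq n.+1 (cdelta n phi) (fun _ => 0%R).

Definition cCobound (n : nat) (phi : cochain) : Prop :=
  if n is n'.+1 then exists psi, cEq n (cdelta n' psi) phi
  else cEq 0 phi (fun _ => 0%R).

Definition chi (x : grel) : cochain :=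
  fun s => ((mdim x.1 s)%:Z - (mdim x.2 s)%:Z)%R.

(* induced map G^n(C,k) -> H^n(|C|;Z) is surjective / injective *)
Definition chiEpi (n : nat) : Prop :=
  forall phi, cCocycle n phi ->
    exists x, grValid KG n x /\ grCocycle KG n x /\
              cCobound n (fun s => (phi s - chi x s)%R).

Definition chiMono (n : nat) : Prop :=
  forall x, grValid KG n x -> grCocycle KG n x ->
    cCobound n (chi x) -> grCobound KG n x.

End Cat.

(* Main.v *)
Require Import Defs.
From mathcomp Require Import all_boot all_order all_algebra.
From Stdlib Require Import Classical.
From mathcomp Require Import zify.
Set Implicit Arguments. Unset Strict Implicit. Unset Printing Implicit Defensive.
Import Order.TTheory GRing.Theory Num.Theory.

Fixpoint chainP (C : FinCat) (x : Obj C) (L : seq (Mor C)) (y : Obj C) : bool :=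
  if L is f :: r then (dom f == x) && chainP (cod f) r y else x == y.

Definition objs (C : FinCat) (x : Obj C) (L : seq (Mor C)) := x :: map cod L.

Lemma chain_cat (C : FinCat) (x y z : Obj C) L1 L2 :
  chainP x L1 y -> chainP y L2 z -> chainP x (L1 ++ L2) z.
Proof.
elim: L1 x => [|f r IH] x /=; first by move/eqP->.
by case/andP=> -> /IH H /H ->.
Qed.

Lemma chain_end (C : FinCat) (x y : Obj C) L :
  chainP x L y -> y = last x (map cod L).
Proof. by elim: L x => [|f r IH] x /=; [move/eqP | case/andP=> _ /IH]. Qed.

Lemma isid_domcod (C : FinCat) (f : Mor C) : isid f -> dom f = cod f.
Proof. by case/existsP=> a /eqP->; rewrite dom_idm cod_idm. Qed.

Lemma chain_filter (C : FinCat) (x y : Obj C) L :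
  chainP x L y -> chainP x (filter (fun f => ~~ isid f) L) y.
Proof.
elim: L x => [|f r IH] x //=; case/andP=> /eqP Hd Hr.
case: ifP => Hf /=; first by rewrite Hd eqxx IH.
move/negbFE: Hf => /isid_domcod Hdc. by rewrite -Hd Hdc; apply: IH.
Qed.

Lemma chain_take (C : FinCat) (x y : Obj C) L j :
  chainP x L y -> j <= size L -> chainP x (take j L) (nth x (objs x L) j).
Proof.
elim: L x j => [|f r IH] x [|j] //=; case/andP=> /eqP Hd Hr Hj.
rewrite Hd eqxx /=. have := IH _ j Hr Hj.
by rewrite /objs /= (set_nth_default (cod f)) //= size_map ltnS.
Qed.

Lemma chain_drop (C : FinCat) (x y : Obj C) L j :
  chainP x L y -> j <= size L -> chainP (nth x (objs x L) j) (drop j L) y.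
Proof.
elim: L x j => [|f r IH] x [|j] Hc Hj //.
move: Hc => /= /andP [_ Hr].
have := IH _ j Hr Hj.
by rewrite /objs /= (set_nth_default (cod f)) //= size_map ltnS.
Qed.

Lemma chain_nth (C : FinCat) (x y : Obj C) L d i :
  chainP x L y -> i < size L ->
  dom (nth d L i) = nth x (objs x L) i /\ cod (nth d L i) = nth x (objs x L) i.+1.
Proof.
elim: L x i => [|f r IH] x i //=; case/andP=> /eqP Hd Hr.
case: i => [|i] /= Hi; first by rewrite Hd; case: r {IH Hr Hi}.
have [-> ->] := IH _ _ Hr Hi.
by rewrite /objs /= !(set_nth_default (cod f) x) //= size_map // ltnW.
Qed.

Lemma objs_last (C : FinCat) (x : Obj C) L :
  nth x (objs x L) (size L) = last x (map cod L).
Proof. by rewrite /objs -(size_map cod) -[size _]/((size (x :: map cod L)).-1) nth_last. Qed.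

Definition nonid (C : FinCat) (f : Mor C) := ~~ isid f.

Lemma no_cyc (C : FinCat) : direct C ->
  forall (x : Obj C) L, chainP x L x -> has (@nonid C) L -> False.
Proof.
move=> [_ Hcyc] x L HL Hh.
have HL' := chain_filter HL.
set L' := filter _ L in HL'.
have Hs : 0 < size L' by rewrite size_filter -has_count.
apply: Hcyc; exists (size L'), (nth (idm x) L'); split=> //; split.
  move=> i Hi; have := mem_nth (idm x) Hi; rewrite mem_filter; by case/andP.
move=> i Hi.
have [_ ->] := chain_nth (idm x) HL' Hi.
case: (ltnP i.+1 (size L')) => Hi1.
  rewrite modn_small //. by have [-> _] := chain_nth (idm x) HL' Hi1.
have Hm : i.+1 = size L' by apply/eqP; rewrite eqn_leq Hi Hi1.
rewrite Hm modnn objs_last -(chain_end HL').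
by have [-> _] := chain_nth (idm x) HL' Hs.
Qed.

Lemma has_all_size (T : Type) (p : pred T) s : all p s -> 0 < size s -> has p s.
Proof. by case: s => //= a s /andP [->]. Qed.

Lemma chain_small (C : FinCat) : direct C ->
  forall (x y : Obj C) L, chainP x L y -> all (@nonid C) L -> size L < #|Obj C|.
Proof.
move=> Hd x y L HL Ha.
case: (boolP (uniq (objs x L))) => Hu.
  have := max_card (mem (objs x L)). by rewrite (card_uniqP Hu) /= size_map.
case/(uniqPn x): Hu => i [j [Hij Hj Heq]].
rewrite /= size_map ltnS in Hj.
have H1 := chain_take HL Hj.
have Hi : i <= size (take j L) by rewrite size_take; case: ifP => _; [exact: ltnW | exact: leq_trans (ltnW Hij) Hj].
have H2 := chain_drop H1 Hi.
have Eo : nth x (objs x (take j L)) i = nth x (objs x L) i.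
  rewrite /objs map_take -[x :: take j _]/(take j.+1 (x :: map cod L)). by rewrite nth_take // ltnS ltnW.
rewrite Eo Heq in H2.
exfalso; apply: (no_cyc Hd H2); apply: has_all_size.
  apply/allP=> f /mem_drop /mem_take Hf; exact: (allP Ha).
by rewrite size_drop size_take; case: ifP => _; rewrite subn_gt0 // (leq_trans Hij Hj).
Qed.

Lemma chain_cat_inv (C : FinCat) (x z : Obj C) L1 L2 :
  chainP x (L1 ++ L2) z ->
  chainP x L1 (last x (map cod L1)) /\ chainP (last x (map cod L1)) L2 z.
Proof.
elim: L1 x => [|f r IH] x /=; first by rewrite eqxx.
by case/andP=> -> /IH [-> ->].
Qed.

Lemma reducible_split (C : FinCat) (f : Mor C) : ~~ isid f -> ~ irreducible f ->
  exists g h : Mor C, [/\ cod g = dom h, Defs.comp g h = f, ~~ isid g & ~~ isid h].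
Proof.
move=> Hf Hir.
case: (classic (exists g h : Mor C, [/\ cod g = dom h, Defs.comp g h = f, ~~ isid g & ~~ isid h])) => // Hn.
exfalso; apply: Hir; split=> // g h H1 H2.
case: (boolP (isid g)) => Hg; first by left.
case: (boolP (isid h)) => Hh; first by right.
by exfalso; apply: Hn; exists g, h.
Qed.

Lemma chain_bound (C : FinCat) (N : nat) : direct C -> comp_length C N ->
  forall (x y : Obj C) L, chainP x L y -> all (@nonid C) L -> size L <= N.
Proof.
move=> Hd [_ HN].
suff: forall k (x y : Obj C) L, #|Obj C| - size L <= k -> chainP x L y -> all (@nonid C) L -> size L <= N.
  by move=> H x y L; apply: (H #|Obj C|); rewrite leq_subr.
elim=> [|k IH] x y L Hk HL Ha.
  have := chain_small Hd HL Ha. move: Hk; rewrite leqn0 subn_eq0 => Hk H. by move: (leq_trans H Hk); rewrite ltnn.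
case: (classic (forall f, f \in L -> irreducible f)) => Hall.
  apply: (HN _ (nth (idm x) L)); split.
    by move=> i Hi; apply: Hall; apply: mem_nth.
  move=> i Hi. have [_ ->] := chain_nth (idm x) HL (ltnW Hi).
  by have [-> _] := chain_nth (idm x) HL Hi.
have [f Hf] : exists f, ~ (f \in L -> irreducible f) by apply: not_all_ex_not.
have Hfl : f \in L by apply: NNPP => H; apply: Hf => /H.
have Hfi : ~ irreducible f by move=> H; apply: Hf.
have [g [h [H1 H2 Hg Hh]]] := reducible_split (allP Ha _ Hfl) Hfi.
move: HL Ha Hk; case/splitPr: Hfl => L1 L2 HL Ha Hk.
have [HL1 HL2] := chain_cat_inv HL.
move: HL2 => /= /andP [/eqP Hdf HL2].
have HL' : chainP x (L1 ++ g :: h :: L2) y.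
  apply: (chain_cat HL1) => /=.
  rewrite -Hdf -H2 (dom_comp H1) eqxx H1 eqxx /=.
  by rewrite -(cod_comp H1) H2.
have Ha' : all (@nonid C) (L1 ++ g :: h :: L2).
  move: Ha; rewrite !all_cat /= /nonid Hg Hh. by case/and3P=> -> _ ->.
have := IH _ _ _ _ HL' Ha'.
rewrite !size_cat /= => H.
have : (size L1 + (size L2).+2) <= N.
  apply: H; move: Hk; rewrite !size_cat /= !addnS !subnS. lia.
by move=> H'; apply: leq_trans H'; rewrite leq_add2l.
Qed.

Lemma chain_of_maps (C : FinCat) (x : Obj C) L :
  map dom L = take (size L) (x :: map cod L) -> chainP x L (last x (map cod L)).
Proof.
elim: L x => [|f r IH] x /=; first by rewrite eqxx.
case=> -> H; rewrite eqxx /=; exact: IH.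
Qed.

Lemma ndstr_chain (C : FinCat) n (s : str C) : ndstr n s ->
  exists x, [/\ s.1 = objs x s.2, chainP x s.2 (last x (map cod s.2)),
               size s.2 = n & all (@nonid C) s.2].
Proof.
case: s => [xs L] /and5P [/= /eqP H1 /eqP H2 /eqP H3 /eqP H4 H5].
case: xs H1 H3 H4 => [|x xs] //= H1 H3 H4.
exists x; rewrite /objs -H4; split=> //.
apply: chain_of_maps; by rewrite H4 H2.
Qed.

Lemma ndstr_bound (C : FinCat) (N : nat) n (s : str C) : direct C -> comp_length C N ->
  ndstr n s -> n <= N.
Proof.
move=> Hd HN /ndstr_chain [x [_ Hc <- Ha]]. exact: chain_bound Hd HN _ _ _ Hc Ha.
Qed.

Lemma ladE_nd (C : FinCat) n (l : lad C) : ladE n l -> ndstr n l.1.1 /\ ndstr n l.1.2.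
Proof. by case: l => [[s t] fs] /and5P [-> -> _ _ _]. Qed.

Lemma vlad_E (C : FinCat) K n (l : lad C) : vlad K n l -> ladE n l.
Proof. by case: K => //=; case: l => [[s t] fs] /andP []. Qed.

Lemma ladG_cases (C : FinCat) n (l : lad C) : ladG n l ->
  (l.1.1 = l.1.2 /\ l.2 = map idm l.1.1.1) \/
  exists w : Mor C, last (dom w) l.1.1.1 = dom w /\ head (cod w) l.1.2.1 = cod w.
Proof.
case: l => [[s t] fs] /andP [_ /orP [/andP [/eqP -> /eqP ->]|/existsP [w /and3P [/eqP H1 /eqP H2 _]]]].
  by left.
by right; exists w.
Qed.

Lemma wchain (C : FinCat) n (a b : str C) (w : Mor C) :
  ndstr n a -> ndstr n b -> last (dom w) a.1 = dom w -> head (cod w) b.1 = cod w ->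
  exists xa xb, [/\ a.1 = objs xa a.2, b.1 = objs xb b.2, xb = cod w,
     chainP xa (a.2 ++ w :: b.2) (last xb (map cod b.2)) &
     [/\ size a.2 = n, size b.2 = n, all (@nonid C) a.2 & all (@nonid C) b.2]].
Proof.
move=> /ndstr_chain [xa [Ea Ca Sa Na]] /ndstr_chain [xb [Eb Cb Sb Nb]].
rewrite Ea Eb /= => H1 H2.
exists xa, xb; split=> //.
apply: (chain_cat Ca) => /=. by rewrite H1 eqxx -H2 Cb.
Qed.

Lemma count_all (T : Type) (p : pred T) s : all p s -> count p s = size s.
Proof. by rewrite all_count => /eqP. Qed.

Lemma discrete (C : FinCat) (N : nat) n (l : lad C) : direct C -> comp_length C N ->
  N < n + n -> ladG n l -> l.1.1 = l.1.2 /\ l.2 = map idm l.1.1.1.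
Proof.
move=> Hd HN Hn Hl.
have [Hs Ht] := ladE_nd (vlad_E (K:=KG) Hl).
case: (ladG_cases Hl) => // [[w [H1 H2]]].
have [xa [xb [_ _ _ Hc [Sa Sb Na Nb]]]] := wchain Hs Ht H1 H2.
have := chain_bound Hd HN (chain_filter Hc) (filter_all _ _).
rewrite size_filter count_cat /= (count_all Na) (count_all Nb) Sa Sb => H.
exfalso; move: Hn; rewrite ltnNge; move/negP; apply.
apply: leq_trans H; rewrite leq_add2l; exact: leq_addl.
Qed.

Lemma wbranch (C : FinCat) n (l : lad C) (a b : str C) : ladG n l -> l.1 = (a, b) -> a <> b ->
  exists w : Mor C, last (dom w) a.1 = dom w /\ head (cod w) b.1 = cod w.
Proof.
move=> Hl E Hab; case: (ladG_cases Hl); rewrite E //=. by case.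
Qed.

Lemma cyc2 (C : FinCat) n (l1 l2 : lad C) (a b : str C) : direct C ->
  ladG n l1 -> l1.1 = (a, b) -> ladG n l2 -> l2.1 = (b, a) -> a <> b -> False.
Proof.
move=> Hd H1 E1 H2 E2 Hab.
have [w1 [A1 B1]] := wbranch H1 E1 Hab.
have [w2 [A2 B2]] := wbranch H2 E2 (nesym Hab).
have [Ha Hb] := ladE_nd (vlad_E (K:=KG) H1); rewrite E1 /= in Ha Hb.
have [xa [xb [Ea Eb Exb Hc [Sa Sb Na Nb]]]] := wchain Ha Hb A1 B1.
move: A2 B2; rewrite Eb Ea /= => A2 B2.
have Hc' : chainP xa (a.2 ++ w1 :: b.2 ++ [:: w2]) xa.
  rewrite -cat_cons catA; apply: (chain_cat Hc) => /=.
  by rewrite A2 eqxx B2 eqxx.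
apply: (no_cyc Hd Hc').
have [n0|npos] := posnP n; last first.
  by rewrite has_cat has_all_size // Sa.
rewrite n0 in Sa Sb.
rewrite has_cat /=; apply/orP; right; apply/orP; left.
apply/negP => /isid_domcod Hw; apply: Hab.
case: a b Ea Eb A1 Exb Sa Sb {Hc Hc' E1 E2 Na Nb Ha Hb A2 B2 B1 H1 H2} => [xs1 L1] [xs2 L2] /= -> -> A1 Exb.
move/size0nil => E1 /size0nil E2; subst L1 L2. move: A1 => /= A1. by rewrite /objs A1 Hw -Exb.
Qed.

Lemma nth_sdel0 (T : Type) (d : T) i (xs : seq T) : 1 < size xs ->
  nth d (sdel i xs) 0 = nth d xs (i == 0).
Proof.
move=> Hs; rewrite /sdel; case: i => [|i] /=; first by rewrite take0 /= nth_drop.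
case: xs Hs => [|x xs] //=.
Qed.

Lemma face_dist (C : FinCat) m (l : lad C) (a b : str C) i : direct C -> 0 < m ->
  ladG m l -> l.1 = (a, b) -> a <> b -> sface i a = sface i b -> False.
Proof.
move=> Hd Hm Hl E Hab Hf.
have [w [A B]] := wbranch Hl E Hab.
have [Ha Hb] := ladE_nd (vlad_E (K:=KG) Hl); rewrite E /= in Ha Hb.
have [xa [_ [Ea _ _ _ [Sa _ Na _]]]] := wchain Ha Hb A B.
have /ndstr_chain [xa' [Ea' Ca Sa' Na']] := Ha.
have /ndstr_chain [xb [Eb Cb Sb Nb]] := Hb.
set j := nat_of_bool (i == 0).
have Hj : j <= m by rewrite /j; case: (i == 0).
have Ej : nth xa a.1 j = nth xa b.1 j.
  have Hf1 : sdel i a.1 = sdel i b.1 by move: Hf; rewrite /sface; case.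
  have Sa1 : 1 < size a.1 by rewrite Ea' /= size_map Sa' ltnS.
  have Sb1 : 1 < size b.1 by rewrite Eb /= size_map Sb ltnS.
  by rewrite -(nth_sdel0 _ _ Sa1) -(nth_sdel0 _ _ Sb1) Hf1.
have Hj1 : j <= size a.2 by rewrite Sa'.
have Hj2 : j <= size b.2 by rewrite Sb.
have C1 := chain_drop Ca Hj1.
have C2 := chain_take Cb Hj2.
rewrite -Ea' -Eb in C1 C2.
move: A B; rewrite Ea' Eb /= => A B.
have Hc : chainP (nth xa' a.1 j) (drop j a.2 ++ w :: take j b.2) (nth xb b.1 j).
  apply: (chain_cat C1) => /=. by rewrite A eqxx -B.
rewrite (set_nth_default xa xa') in Hc; last by rewrite Ea' /= size_map Sa' ltnS.
rewrite (set_nth_default xa xb) in Hc; last by rewrite Eb /= size_map Sb ltnS.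
rewrite -Ej in Hc.
apply: (no_cyc Hd Hc).
rewrite has_cat /=; rewrite /j; case: (i == 0) => /=.
  apply/orP; right; apply/orP; right.
  apply: has_all_size; first by apply/allP=> f /mem_take; apply/allP.
  by rewrite size_take Sb; case: ifP => //; rewrite Hm.
by apply/orP; left; rewrite drop0 has_all_size // Sa'.
Qed.

Local Open Scope ring_scope.

Definition Dm (k : fieldType) m p : 'M[k]_(m, p) := \matrix_(i, j) ((i : nat) == j)%:R.

Lemma Dm_id (k : fieldType) m : Dm k m m = 1%:M.
Proof. by apply/matrixP=> i j; rewrite !mxE. Qed.

Lemma Dm_inv (k : fieldType) m p : m = p -> Dm k m p *m Dm k p m = 1%:M.
Proof. by move=> ->; rewrite Dm_id mulmx1. Qed.

Definition Bm (C : FinCat) (k : fieldType) (d : str C -> nat) : rmod C k :=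
  @RMod C k d (fun a b _ => if a == b then Dm k (d a) (d b) else 0).

Lemma isMod_Bm (C : FinCat) (k : fieldType) n (d : str C -> nat) :
  direct C -> isMod KG n (Bm k d).
Proof.
move=> Hd; split=> [a _|a b c l1 l2 H1 H2 E1 E2] /=; first by rewrite eqxx Dm_id.
case: (eqVneq a b) => [<-|Hab].
  case: (eqVneq a c) => [<-|Hac]; first by rewrite Dm_id mulmx1.
  by rewrite mulmx0.
rewrite mul0mx; case: (eqVneq a c) => // Hac.
subst c; exfalso; exact: (cyc2 Hd H1 E1 H2 E2 (elimN eqP Hab)).
Qed.

Definition good (C : FinCat) (k : fieldType) K n (M : rmod C k) : Prop :=
  (forall a b l, vlad K n l -> l.1 = (a, b) -> a <> b -> mact M a b l = 0) /\
  (forall a l, vlad K n l -> l.1 = (a, a) -> mact M a a l = 1%:M).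

Lemma good_zmod (C : FinCat) (k : fieldType) K n : good K n (zmod C k).
Proof. by split=> * //=; apply/matrixP=> i []. Qed.

Lemma good_dsum (C : FinCat) (k : fieldType) K n (M1 M2 : rmod C k) :
  good K n M1 -> good K n M2 -> good K n (dsum M1 M2).
Proof.
move=> [A1 B1] [A2 B2]; split=> [a b l Hl E Hab|a l Hl E] /=.
  by rewrite (A1 _ _ _ Hl E Hab) (A2 _ _ _ Hl E Hab) block_mx0.
by rewrite (B1 _ _ Hl E) (B2 _ _ Hl E) -scalar_mx_block.
Qed.

Lemma good_big (C : FinCat) (k : fieldType) K n (Ms : seq (rmod C k)) :
  (forall M, List.In M Ms -> good K n M) -> good K n (bigdsum Ms).
Proof.
elim: Ms => [|M Ms IH] H /=; first exact: good_zmod.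
apply: good_dsum; first by apply: H; left.
by apply: IH => M' HM; apply: H; right.
Qed.

Lemma good_pb (C : FinCat) (k : fieldType) m i (d : str C -> nat) :
  direct C -> good KG m.+1 (pb i (Bm k d)).
Proof.
move=> Hd; split=> [a b l Hl E Hab|a l Hl E] /=; last by rewrite eqxx Dm_id.
case: eqP => // Hf; exfalso; exact: (face_dist Hd (ltn0Sn m) Hl E Hab Hf).
Qed.

Lemma isMod_zmod (C : FinCat) (k : fieldType) K n : isMod K n (zmod C k).
Proof. by split=> * /=; [apply/matrixP=> i [] | rewrite mulmx0]. Qed.

Lemma iso_good (C : FinCat) (k : fieldType) K n (M1 M2 : rmod C k) :
  good K n M1 -> good K n M2 -> (forall a, ndstr n a -> mdim M1 a = mdim M2 a) ->
  modIso K n M1 M2.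
Proof.
move=> [A1 B1] [A2 B2] Hdim.
exists (fun a => Dm k _ _), (fun a => Dm k _ _); split.
  by move=> a Ha; rewrite !Dm_inv // Hdim.
move=> a b l Hl E; case: (eqVneq a b) => [Eab|Hab].
  subst b; by rewrite (B1 _ _ Hl E) (B2 _ _ Hl E) mul1mx mulmx1.
have Hab' := elimN eqP Hab.
by rewrite (A1 _ _ _ Hl E Hab') (A2 _ _ _ Hl E Hab') mul0mx mulmx0.
Qed.

Definition posp (z : int) : nat := if z is Posz m then m else 0%N.
Definition negp (z : int) : nat := if z is Negz m then m.+1 else 0%N.

Lemma posnegE (z : int) : z = (posp z)%:Z - (negp z)%:Z.
Proof. by case: z => m /=; rewrite ?subr0 // NegzE sub0r. Qed.

Definition Bpair (C : FinCat) (k : fieldType) m (psi : cochain C) : Defs.grel C k :=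
  (Bm k (fun s => if ndstr m s then posp (psi s) else 0%N),
   Bm k (fun s => if ndstr m s then negp (psi s) else 0%N)).

Lemma mdim_big (C : FinCat) (k : fieldType) (Ms : seq (rmod C k)) a :
  mdim (bigdsum Ms) a = (\sum_(M <- Ms) mdim M a)%N.
Proof. by elim: Ms => [|M Ms IH] /=; rewrite ?big_nil ?big_cons ?IH. Qed.

Lemma alt_sum (g : nat -> int) M :
  \sum_(i < M) (-1) ^+ i * g i =
  \sum_(i <- iota 0 M | ~~ odd i) g i - \sum_(i <- iota 0 M | odd i) g i.
Proof.
rewrite -(big_mkord xpredT (fun i => (-1) ^+ i * g i)) /index_iota subn0.
rewrite (bigID (fun i => odd i)) /= addrC; congr (_ + _).
  by apply: eq_bigr => i Hi; rewrite -signr_odd (negbTE Hi) mul1r.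
rewrite -sumrN; apply: eq_bigr => i Hi; by rewrite -signr_odd Hi mulN1r.
Qed.

Lemma Posz_sum (I : Type) (r : seq I) (P : pred I) (F : I -> nat) :
  Posz (\sum_(i <- r | P i) F i)%N = \sum_(i <- r | P i) (F i)%:Z.
Proof. exact: (big_morph Posz PoszD (erefl _)). Qed.

Lemma dGr_dim (C : FinCat) (k : fieldType) m (psi : cochain C) a :
  (mdim (dGr m (Bpair k m psi)).1 a)%:Z - (mdim (dGr m (Bpair k m psi)).2 a)%:Z
  = cdelta m psi a.
Proof.
rewrite /cdelta (alt_sum (fun i => if ndstr m (sface i a) then psi (sface i a) else 0)).
rewrite /dGr; cbn [fst snd]; rewrite !mdim_big !big_cat !big_map !big_filter !PoszD !Posz_sum.
have E : forall i, (if ndstr m (sface i a) then psi (sface i a) else 0) =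
   (if ndstr m (sface i a) then posp (psi (sface i a)) else 0%N)%:Z -
   (if ndstr m (sface i a) then negp (psi (sface i a)) else 0%N)%:Z.
  by move=> i; case: ifP => _; [apply: posnegE | rewrite subr0].
under [X in _ = X - _]eq_bigr do rewrite E.
under [X in _ = _ - X]eq_bigr do rewrite E.
rewrite !sumrB.
set A := \sum_(i <- _ | _) _; set B := \sum_(i <- _ | _) _; set D := \sum_(i <- _ | _) _; set F := \sum_(i <- _ | _) _.
lia.
Qed.

Lemma good_vac (C : FinCat) (k : fieldType) (N : nat) K n (M : rmod C k) :
  direct C -> comp_length C N -> (N < n)%N -> good K n M.
Proof.
move=> Hd HN Hn.
have F : forall l : lad C, vlad K n l -> False.
  move=> l /vlad_E /ladE_nd [/(ndstr_bound Hd HN) H _].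
  by move: Hn; rewrite ltnNge H.
by split=> [a b l /F|a l /F].
Qed.

Lemma part1 (C : FinCat) (k : fieldType) (N : nat) K n :
  direct C -> comp_length C N -> (N < n)%N -> grVanish C k K n.
Proof.
case: n => [|n] Hd HN Hn x Hx Hc //.
exists (gr0 C k); split; first by split; apply: isMod_zmod.
exists (zmod C k); split; first exact: isMod_zmod.
apply: iso_good; [exact: (good_vac _ _ Hd HN Hn)|exact: (good_vac _ _ Hd HN Hn)|].
move=> a /(ndstr_bound Hd HN) H. by move: Hn; rewrite ltnNge H.
Qed.

Lemma good_dGr (C : FinCat) (k : fieldType) m (y : Defs.grel C k) (d1 d2 : str C -> nat) :
  direct C -> y = (Bm k d1, Bm k d2) ->
  good KG m.+1 (dGr m y).1 /\ good KG m.+1 (dGr m y).2.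
Proof.
have Hcat : forall (T : Type) (s1 s2 : seq T) z, List.In z (s1 ++ s2)%SEQ ->
    List.In z s1 \/ List.In z s2.
  move=> T s1 s2 z; elim: s1 => [|t r IH] /=; first by right.
  by case=> [->|/IH [|]]; [left; left|left; right|right].
have Hmap : forall (T U : Type) (f : T -> U) s z, List.In z (map f s) -> exists t, z = f t.
  move=> T U f s z; elim: s => [|t r IH] //= [<-|/IH] //. by exists t.
move=> Hd ->; rewrite /dGr; cbn [fst snd]; split; apply: good_big => M HM;
  case: (Hcat _ _ _ _ HM) => H; have [i ->] := Hmap _ _ _ _ _ H; exact: good_pb.
Qed.

Lemma chiEpi_gen (C : FinCat) (k : fieldType) n : direct C -> (0 < n)%N -> chiEpi C k n.
Proof.
move=> Hd Hn phi Hphi.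
exists (Bpair k n phi); split; first by split; apply: isMod_Bm.
split.
  exists (zmod C k); split; first exact: isMod_zmod.
  have [G1 G2] := good_dGr n Hd (erefl (Bpair k n phi)).
  apply: iso_good.
  - by apply: good_dsum; [apply: good_dsum|]; rewrite //; apply: good_zmod.
  - by apply: good_dsum; [apply: good_dsum|]; rewrite //; apply: good_zmod.
  move=> a Ha; have := dGr_dim k n phi a; rewrite (Hphi a Ha) /=. lia.
case: n Hn {Hphi} => [|n] // _.
exists (fun _ => 0) => s Hs.
rewrite /cdelta big1; last by move=> i _; case: ifP; rewrite mulr0.
rewrite /chi /= Hs -posnegE subrr //.
Qed.

Lemma good_disc (C : FinCat) (k : fieldType) (N : nat) n (M : rmod C k) :
  direct C -> comp_length C N -> (N < n + n)%N -> isMod KG n M -> good KG n M.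
Proof.
move=> Hd HN Hn [HM _]; split=> [a b l Hl E Hab|a l Hl E].
  by have [] := discrete Hd HN Hn Hl; rewrite E.
have [_ E2] := discrete Hd HN Hn Hl.
have [Ha _] := ladE_nd (vlad_E (K:=KG) Hl); rewrite E in Ha E2.
case: l Hl E E2 => [l1 l2] /= _ -> ->. exact: HM.
Qed.

Lemma chiMono_gen (C : FinCat) (k : fieldType) (N : nat) n :
  direct C -> comp_length C N -> (N < n + n)%N -> chiMono C k n.
Proof.
move=> Hd HN Hn x [Hx1 Hx2] _ Hcb.
case: n Hn Hcb Hx1 Hx2 => [|n] Hn //.
move=> [psi Hpsi] Hx1 Hx2.
exists (Bpair k n psi); split; first by split; apply: isMod_Bm.
exists (zmod C k); split; first exact: isMod_zmod.
have [G1 G2] := good_dGr n Hd (erefl (Bpair k n psi)).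
have X1 := good_disc Hd HN Hn Hx1.
have X2 := good_disc Hd HN Hn Hx2.
apply: iso_good.
- by apply: good_dsum; [apply: good_dsum|]; rewrite //; apply: good_zmod.
- by apply: good_dsum; [apply: good_dsum|]; rewrite //; apply: good_zmod.
move=> a Ha; have := dGr_dim k n psi a; rewrite (Hpsi a Ha) /chi /=. lia.
Qed.

Theorem proposition4p10 (k : fieldType) (C : FinCat) (N : nat) :
  direct C -> comp_length C N -> (1 <= N)%N ->
  (forall n, (N < n)%N -> grVanish C k KE n /\ grVanish C k KG n) /\
  (forall n, (N./2.+1 <= n)%N -> chiEpi C k n /\ chiMono C k n) /\
  (forall n, (1 <= n <= N./2)%N -> chiEpi C k n).
Proof.
move=> Hd HN H1; split; [|split].
- by move=> n Hn; split; apply: part1 Hd HN Hn.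
- move=> n Hn; split; first by apply: chiEpi_gen => //; apply: leq_trans Hn.
  apply: chiMono_gen Hd HN _.
  have E := odd_double_half N; rewrite -addnn in E.
  have : ((odd N : nat) <= 1)%N by case: odd.
  lia.
- move=> n /andP [Hn _]; exact: chiEpi_gen.
Qed.
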